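(* Let $\mathcal{G}=(G,<,+,0,\ldots)$ be an o-minimal expansion of an ordered abelian group satisfying the Bounded Condition. Then a cell $C\subseteq G^n$ is good if and only if $C$ is bounded.
   Context: A definable set $M\subseteq G^n$ is bounded if $M\subseteq[b,b']^n$ for some $b,b'\in G$. $\mathcal{G}$ satisfies the Bounded Condition if whenever $M\subseteq G^m$ is a bounded definable set, $N\subseteq G^n$ is a definable set and there is a definable bijection between $M$ and $N$, then $N$ is bounded. Cells are in the sense of o-minimal structures. For $k\le n$ let $p_k:G^n\to G^k$ be the projection onto the first $k$ coordinates. A cell $C\subseteq G^n$ is exceptional if there exist $k$ and a cell $A\subseteq G^{k-1}$ with $p_k(C)=A\times G$. A non-exceptional cell $C$ is bad if there exist $k$, a cell $A\subseteq G^{k-1}$ and a definable $f:A\to G$ with $p_k(C)=\{(x,t)\in A\times G\mid t<f(x)\}$ or $\{(x,t)\in A\times G\mid f(x)<t\}$. A cell is good if it is neither exceptional nor bad. *)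

(* Defs.v *)
(* Points of G^n are lists of length n; subsets of G^n are
   predicates on lists (contained in the lists of length n). *)
From Stdlib Require Import List Arith.
Import ListNotations.
Set Implicit Arguments.

Record OAG := {
  carrier :> Type;
  lt : carrier -> carrier -> Prop;
  add : carrier -> carrier -> carrier;
  opp : carrier -> carrier;
  zero : carrier;
  lt_irrefl : forall x, ~ lt x x;
  lt_trans : forall x y z, lt x y -> lt y z -> lt x z;
  lt_total : forall x y, lt x y \/ x = y \/ lt y x;
  addA : forall x y z, add x (add y z) = add (add x y) z;
  addC : forall x y, add x y = add y x;
  add0 : forall x, add zero x = x;
  addN : forall x, add (opp x) x = zero;
  lt_add : forall x y z, lt x y -> lt (add x z) (add y z)
}.

Section Defs.
Variable G : OAG.

Definition le (x y : G) : Prop := lt G x y \/ x = y.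

(** Pieces of a finite union of points and open intervals in G
    (interval endpoints in G ∪ {-oo,+oo}, [None] = infinite endpoint). *)
Inductive piece := Pt (a : G) | Itv (lo hi : option G).

Definition in_piece (p : piece) (t : G) : Prop :=
  match p with
  | Pt a => t = a
  | Itv lo hi =>
      match lo with None => True | Some a => lt G a t end /\
      match hi with None => True | Some b => lt G t b end
  end.

Definition full (n : nat) (x : list G) : Prop := length x = n.

(** An o-minimal expansion of (G,<,+,0): for each n, the collection
    [def n] of definable subsets of G^n (with parameters), following
    van den Dries, "Tame topology and o-minimal structures", Ch. 1. *)
Record omin_exp := {
  def : nat -> (list G -> Prop) -> Prop;
  def_sub : forall n S, def n S -> forall x, S x -> length x = n;
  def_ext : forall n S T, def n S -> (forall x, S x <-> T x) -> def n T;
  def_full : forall n, def n (full n);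
  def_compl : forall n S, def n S -> def n (fun x => full n x /\ ~ S x);
  def_union : forall n S T, def n S -> def n T -> def n (fun x => S x \/ T x);
  def_prodr : forall n S, def n S ->
      def (n + 1) (fun z => exists x t, z = x ++ [t] /\ S x);
  def_prodl : forall n S, def n S ->
      def (1 + n) (fun z => exists t x, z = t :: x /\ S x);
  def_diag : forall n,
      def n (fun x => full n x /\ nth 0 x (zero G) = nth (n - 1) x (zero G));
  def_proj : forall n S, def (n + 1) S ->
      def n (fun x => exists t, S (x ++ [t]));
  def_lt : def 2 (fun z => exists x y, z = [x; y] /\ lt G x y);
  def_add : def 3 (fun z => exists x y, z = [x; y; add G x y]);
  def_pt : forall a : G, def 1 (fun z => z = [a]);
  ominimal : forall S, def 1 S -> exists ps : list piece,
      forall z, S z <-> exists t, z = [t] /\ exists p, In p ps /\ in_piece p t;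
  dense : forall x y : G, lt G x y -> exists z, lt G x z /\ lt G z y;
  no_max : forall x : G, exists y, lt G x y;
  no_min : forall x : G, exists y, lt G y x
}.

Variable M : omin_exp.

Definition in_box (lo hi x : list G) : Prop :=
  length x = length lo /\ length hi = length lo /\
  forall i, i < length lo ->
    lt G (nth i lo (zero G)) (nth i x (zero G)) /\
    lt G (nth i x (zero G)) (nth i hi (zero G)).

Definition def_fun (n : nat) (C : list G -> Prop) (f : list G -> G) : Prop :=
  def M (n + 1) (fun z => exists x, C x /\ z = x ++ [f x]).

Definition cont_on (n : nat) (C : list G -> Prop) (f : list G -> G) : Prop :=
  forall x, C x -> forall a b, lt G a (f x) -> lt G (f x) b ->
    exists lo hi, length lo = n /\ in_box lo hi x /\
      forall y, C y -> in_box lo hi y -> lt G a (f y) /\ lt G (f y) b.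

Definition lower_ok (f : option (list G -> G)) (x : list G) (t : G) : Prop :=
  match f with None => True | Some f => lt G (f x) t end.
Definition upper_ok (g : option (list G -> G)) (x : list G) (t : G) : Prop :=
  match g with None => True | Some g => lt G t (g x) end.
Definition ok_bound (n : nat) (C : list G -> Prop) (f : option (list G -> G)) :=
  match f with None => True | Some f => def_fun n C f /\ cont_on n C f end.

(** Cells (van den Dries, Ch. 3, Def. 2.3). *)
Inductive is_cell : nat -> (list G -> Prop) -> Prop :=
| cell_nil : forall D, (forall x, D x <-> x = []) -> is_cell 0 D
| cell_graph : forall n C f D, is_cell n C -> def_fun n C f -> cont_on n C f ->
    (forall z, D z <-> exists x, C x /\ z = x ++ [f x]) -> is_cell (n + 1) D
| cell_band : forall n C (f g : option (list G -> G)) D, is_cell n C ->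
    ok_bound n C f -> ok_bound n C g ->
    (forall x, C x -> match f, g with
                      | Some f, Some g => lt G (f x) (g x)
                      | _, _ => True end) ->
    (forall z, D z <-> exists x t, z = x ++ [t] /\ C x /\
                         lower_ok f x t /\ upper_ok g x t) ->
    is_cell (n + 1) D.

Definition proj (k : nat) (C : list G -> Prop) (y : list G) : Prop :=
  exists x, C x /\ y = firstn k x.

Definition bounded (S : list G -> Prop) : Prop :=
  exists b b' : G, forall x, S x -> Forall (fun y => le b y /\ le y b') x.

Definition def_bij (m n : nat) (M1 N1 : list G -> Prop) : Prop :=
  exists Gam, def M (m + n) Gam /\
    (forall z, Gam z -> exists x y, z = x ++ y /\ M1 x /\ N1 y) /\
    (forall x, M1 x -> exists! y, Gam (x ++ y)) /\
    (forall y, N1 y -> exists! x, Gam (x ++ y)).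

Definition bounded_condition : Prop :=
  forall m n (M1 N1 : list G -> Prop), def M m M1 -> def M n N1 ->
    bounded M1 -> def_bij m n M1 N1 -> bounded N1.

(** Exceptional / bad / good cells; p_(k+1) with k < n covers 1 <= k+1 <= n. *)
Definition exceptional (n : nat) (C : list G -> Prop) : Prop :=
  exists k A, k < n /\ is_cell k A /\
    forall z, proj (k + 1) C z <-> exists x t, z = x ++ [t] /\ A x.

Definition bad (n : nat) (C : list G -> Prop) : Prop :=
  ~ exceptional n C /\
  exists k A f, k < n /\ is_cell k A /\ def_fun k A f /\
    ((forall z, proj (k + 1) C z <-> exists x t, z = x ++ [t] /\ A x /\ lt G t (f x))
     \/
     (forall z, proj (k + 1) C z <-> exists x t, z = x ++ [t] /\ A x /\ lt G (f x) t)).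

Definition good (n : nat) (C : list G -> Prop) : Prop :=
  ~ exceptional n C /\ ~ bad n C.

End Defs.

Arguments bounded {G} S.
Arguments le {G} x y.

(* Main.v *)
Require Import Defs.
From Stdlib Require Import List Arith Lia Classical.
Import ListNotations.

Lemma app_len_inj {A} (a b c d : list A) :
  length a = length b -> a ++ c = b ++ d -> a = b /\ c = d.
Proof.
  revert b; induction a as [|x a IH]; intros [|y b] Hl He; simpl in *; try discriminate; auto.
  injection He as -> He. injection Hl as Hl. destruct (IH b Hl He) as [-> ->]. auto.
Qed.
Section Tools.
Variable G : OAG.
Variable M : omin_exp G.
Notation z0 := (zero G).

Lemma def_cast n m S : n = m -> def M n S -> def M m S.
Proof. intros ->; auto. Qed.

Lemma snoc_split {A} (z : list A) n : length z = S n ->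
  exists x t, z = x ++ [t] /\ length x = n.
Proof.
  intros Hl. destruct (exists_last (l:=z)) as [x [t ->]].
  { intros ->; discriminate. }
  exists x, t; split; auto. rewrite length_app in Hl; simpl in Hl; lia.
Qed.

Lemma def_inter N S T : def M N S -> def M N T -> def M N (fun x => S x /\ T x).
Proof.
  intros HS HT.
  pose proof (def_compl M _ _ (def_union M _ _ _ (def_compl M _ _ HS) (def_compl M _ _ HT))) as H.
  eapply def_ext; [exact H|]. intros x; split.
  - intros [Hf Hn]. split; destruct (classic (S x)), (classic (T x)); tauto.
  - intros [Hs Ht]. split; [exact (def_sub M _ _ HS _ Hs)|]. tauto.
Qed.

Lemma prodr_iter N S k : def M N S ->
  def M (N + k) (fun z => length z = N + k /\ S (firstn N z)).
Proof.
  intros HS. induction k.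
  - eapply def_cast; [symmetry; apply Nat.add_0_r|].
    eapply def_ext; [exact HS|]. intros x; split.
    + intros Hx. rewrite Nat.add_0_r. pose proof (def_sub M _ _ HS _ Hx).
      split; auto. rewrite firstn_all2; auto; lia.
    + intros [Hl Hx]. rewrite firstn_all2 in Hx; auto; lia.
  - eapply def_cast; [|eapply def_ext; [exact (def_prodr M _ _ IHk)|]]. lia.
    intros z; split.
    + intros (x & t & -> & Hl & Hx). rewrite length_app; simpl. split; [lia|].
      rewrite firstn_app. replace (N - length x) with 0 by lia. simpl.
      rewrite app_nil_r. exact Hx.
    + intros [Hl Hx]. destruct (snoc_split z (N+k)) as (x & t & -> & Hx'). lia.
      exists x, t; split; auto. split; auto.
      rewrite firstn_app in Hx. replace (N - length x) with 0 in Hx by lia.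
      simpl in Hx. now rewrite app_nil_r in Hx.
Qed.

Lemma prodl_iter N S k : def M N S ->
  def M (k + N) (fun z => length z = k + N /\ S (skipn k z)).
Proof.
  intros HS. induction k.
  - eapply def_ext; [exact HS|]. intros x; split.
    + intros Hx. simpl. split; auto. exact (def_sub M _ _ HS _ Hx).
    + intros [_ Hx]. exact Hx.
  - eapply def_ext; [exact (def_prodl M _ _ IHk)|].
    intros z; split.
    + intros (t & x & -> & Hl & Hx). simpl. split; auto.
    + intros [Hl Hx]. destruct z as [|t x]; [discriminate|].
      exists t, x; split; auto.
Qed.

Lemma proj_iter N k S : def M (N + k) S ->
  def M N (fun x => exists y, length y = k /\ S (x ++ y)).
Proof.
  revert S. induction k; intros S HS.
  - eapply def_ext; [eapply def_cast; [apply Nat.add_0_r|exact HS]|].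
    intros x; split.
    + intros Hx. exists []. rewrite app_nil_r; auto.
    + intros ([|a y] & Hl & Hx); [rewrite app_nil_r in Hx; auto|discriminate].
  - assert (H1 : def M (N + k + 1) S) by (eapply def_cast; [|exact HS]; lia).
    pose proof (IHk _ (def_proj M _ _ H1)) as H2.
    eapply def_ext; [exact H2|]. intros x; split.
    + intros (y & Hl & t & Hy). exists (y ++ [t]). rewrite length_app, app_assoc.
      simpl; split; auto; lia.
    + intros (y & Hl & Hy). destruct (snoc_split y k) as (y' & t & -> & Hy'); auto.
      exists y'; split; auto. exists t. rewrite <- app_assoc; auto.
Qed.


Lemma nth_fs {A} (z : list A) L i d : i < L -> nth i (firstn L z) d = nth i z d.
Proof. intros H. rewrite nth_firstn. destruct (Nat.ltb_spec i L); auto; lia. Qed.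

Lemma def_eq N i j : i < j -> j < N ->
  def M N (fun w => length w = N /\ nth i w z0 = nth j w z0).
Proof.
  intros Hij HjN.
  pose proof (prodr_iter _ _ (N - (i + (j - i + 1))) (prodl_iter _ _ i (def_diag M (j - i + 1)))) as H.
  eapply def_ext; [eapply def_cast; [|exact H]; lia|].
  intros w; simpl. unfold full.
  rewrite !nth_skipn, !nth_fs by lia.
  replace (i + (j - i + 1 - 1)) with j by lia. rewrite Nat.add_0_r.
  rewrite length_skipn, length_firstn.
  split; [intros (? & ? & ? & ?); split; auto; lia|intros [? ?]; repeat split; auto; lia].
Qed.

Lemma def_eqblock N m off : m <= off -> off + m <= N ->
  def M N (fun w => length w = N /\ forall i, i < m -> nth i w z0 = nth (off + i) w z0).
Proof.
  induction m; intros Ho Hm.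
  - eapply def_ext; [exact (def_full M N)|]. unfold full. intros w; split.
    + intros H; split; auto; intros; lia.
    + intros [H _]; auto.
  - pose proof (def_inter _ _ _ (IHm ltac:(lia) ltac:(lia)) (def_eq N m (off + m) ltac:(lia) ltac:(lia))) as H.
    eapply def_ext; [exact H|]. intros w; split.
    + intros [[Hl Hf] [_ He]]. split; auto. intros i Hi.
      destruct (Nat.eq_dec i m); [subst; auto|apply Hf; lia].
    + intros [Hl Hf]. split; split; auto.
Qed.

Lemma def_rel N i j (R : G -> G -> Prop) :
  def M 2 (fun z => exists x y, z = [x; y] /\ R x y) -> i < N -> j < N ->
  def M N (fun w => length w = N /\ R (nth i w z0) (nth j w z0)).
Proof.
  intros HR Hi Hj.
  pose proof (def_inter _ _ _ (def_inter _ _ _ (prodl_iter _ _ N HR)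
     (def_eq (N + 2) i N ltac:(lia) ltac:(lia))) (def_eq (N + 2) j (N + 1) ltac:(lia) ltac:(lia))) as H.
  pose proof (proj_iter N 2 _ H) as H2.
  eapply def_ext; [exact H2|]. intros x; split.
  - intros (y & Hy & [[[Hl (a & b & Hab & Rab)] [_ E1]] [_ E2]]).
    rewrite length_app in Hl. assert (Hx : length x = N) by lia.
    rewrite skipn_app, Hx, Nat.sub_diag, skipn_all2 in Hab by lia. simpl in Hab. subst y.
    rewrite !app_nth1 in E1, E2 by lia.
    rewrite app_nth2 in E1, E2 by lia. rewrite Hx in E1, E2.
    rewrite Nat.sub_diag in E1. replace (N + 1 - N) with 1 in E2 by lia. simpl in E1, E2.
    split; auto. rewrite E1, E2; auto.
  - intros [Hx Rx]. exists [nth i x z0; nth j x z0]. split; auto.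
    rewrite length_app; simpl. split; [split; [split; [lia|]|]|].
    + exists (nth i x z0), (nth j x z0). split; auto.
      rewrite skipn_app, Hx, Nat.sub_diag, skipn_all2 by lia. auto.
    + split; [lia|]. rewrite app_nth1, app_nth2 by lia. rewrite Hx, Nat.sub_diag. auto.
    + split; [lia|]. rewrite app_nth1, app_nth2 by lia. rewrite Hx.
      replace (N + 1 - N) with 1 by lia. auto.
Qed.


Lemma def_gam n C f : def M n C -> def_fun M n C f -> (forall x, C x -> length x = n) ->
  def M (n + (n + 1)) (fun w => exists x, C x /\ w = x ++ x ++ [f x]).
Proof.
  intros HC Hf HL. unfold def_fun in Hf.
  pose proof (def_inter _ _ _ (def_inter _ _ _ (prodr_iter _ _ (n + 1) HC) (prodl_iter _ _ n Hf))
    (def_eqblock (n + (n + 1)) n n ltac:(lia) ltac:(lia))) as H.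
  eapply def_ext; [exact H|]. intros w; split.
  - intros [[[Hl Hx] [_ (x1 & Hx1 & Hy)]] [_ He]].
    exists x1; split; auto.
    rewrite <- (firstn_skipn n w), Hy. f_equal.
    pose proof (HL _ Hx1).
    apply nth_ext with z0 z0.
    + rewrite length_firstn; lia.
    + intros i Hi. rewrite length_firstn in Hi. rewrite nth_fs by lia.
      rewrite He by lia. rewrite <- nth_skipn, Hy, app_nth1 by lia. auto.
  - intros (x & Hx & ->). pose proof (HL _ Hx).
    rewrite !length_app; simpl. split; [split; [split; [lia|]|]|].
    + rewrite firstn_app, firstn_all2 by lia. replace (n - length x) with 0 by lia. simpl. rewrite app_nil_r; auto.
    + split; [lia|]. rewrite skipn_app, skipn_all2 by lia. replace (n - length x) with 0 by lia. simpl. eauto.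
    + split; [lia|]. intros i Hi. rewrite app_nth1 by lia. rewrite app_nth2 by lia.
      replace (n + i - length x) with i by lia. rewrite app_nth1 by lia. auto.
Qed.

Lemma def_side n C f (R : G -> G -> Prop) : def M n C -> def_fun M n C f ->
  (forall x, C x -> length x = n) ->
  (forall N i j, i < N -> j < N -> def M N (fun w => length w = N /\ R (nth i w z0) (nth j w z0))) ->
  def M (n + 1) (fun z => exists x t, z = x ++ [t] /\ C x /\ R (f x) t).
Proof.
  intros HC Hf HL HR. unfold def_fun in Hf.
  pose proof (def_inter _ _ _ (def_inter _ _ _ (def_inter _ _ _
    (def_cast (n + (n + 2)) ((n + 1) + (n + 1)) _ ltac:(lia) (prodr_iter _ _ (n + 2) HC))
    (prodl_iter _ _ (n + 1) Hf))
    (def_eqblock ((n + 1) + (n + 1)) n (n + 1) ltac:(lia) ltac:(lia)))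
    (HR ((n + 1) + (n + 1)) (n + 1 + n) n ltac:(lia) ltac:(lia))) as H.
  pose proof (proj_iter _ _ _ H) as H2.
  eapply def_ext; [exact H2|]. intros z; split.
  - intros (y & Hy & [[[[Hl Hx] [_ (x1 & Hx1 & Hy1)]] [_ He]] [_ Hr]]).
    rewrite length_app in Hl.
    destruct (snoc_split z n) as (x0 & t & -> & Hx0); [lia|].
    pose proof (HL _ Hx1).
    rewrite skipn_app, length_app in Hy1. simpl in Hy1.
    rewrite skipn_all2 in Hy1 by (rewrite length_app; simpl; lia).
    replace (n + 1 - (length x0 + 1)) with 0 in Hy1 by lia. simpl in Hy1. subst y.
    rewrite <- app_assoc in *. simpl in *.
    assert (E : x1 = x0).
    { apply nth_ext with z0 z0; [lia|]. intros i Hi.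
      specialize (He i ltac:(lia)). rewrite app_nth1 in He by lia.
      rewrite app_nth2 in He by lia. replace (n + 1 + i - length x0) with (S i) in He by lia.
      simpl in He. rewrite app_nth1 in He by lia. auto. }
    subst x1. exists x0, t. split; auto. split.
    + rewrite firstn_app, firstn_all2 in Hx by lia. replace (n - length x0) with 0 in Hx by lia. simpl in Hx.
      rewrite app_nil_r in Hx; auto.
    + rewrite app_nth2 in Hr by lia. rewrite app_nth2 in Hr by lia.
      replace (n + 1 + n - length x0) with (S n) in Hr by lia.
      replace (n - length x0) with 0 in Hr by lia. simpl in Hr.
      rewrite app_nth2 in Hr by lia. replace (n - length x0) with 0 in Hr by lia. simpl in Hr. auto.
  - intros (x & t & -> & Hx & Hr). pose proof (HL _ Hx).
    exists (x ++ [f x]). rewrite length_app; simpl. split; [lia|].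
    rewrite <- app_assoc. simpl.
    split; [split; [split; [split|split]|split]|split].
    + rewrite length_app; simpl; rewrite length_app; simpl; lia.
    + rewrite firstn_app, firstn_all2 by lia. replace (n - length x) with 0 by lia. simpl. rewrite app_nil_r; auto.
    + rewrite length_app; simpl; rewrite length_app; simpl; lia.
    + rewrite skipn_app, skipn_all2 by lia. replace (n + 1 - length x) with 1 by lia.
      simpl. eauto.
    + rewrite length_app; simpl; rewrite length_app; simpl; lia.
    + intros i Hi. rewrite app_nth1 by lia. rewrite app_nth2 by lia.
      replace (n + 1 + i - length x) with (S i) by lia. simpl. rewrite app_nth1 by lia. auto.
    + rewrite length_app; simpl; rewrite length_app; simpl; lia.
    + rewrite app_nth2 by lia. rewrite app_nth2 by lia.
      replace (n + 1 + n - length x) with (S n) by lia.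
      replace (n - length x) with 0 by lia. simpl.
      rewrite app_nth2 by lia. replace (n - length x) with 0 by lia. simpl. auto.
Qed.

End Tools.
Section Cells.
Variable G : OAG.
Variable M : omin_exp G.
Notation z0 := (zero G).
Notation ltG := (lt G).

Lemma le_trans' (a b c : G) : le a b -> le b c -> le a c.
Proof. unfold le. intros [H1| ->] [H2| ->]; auto. left; eapply lt_trans; eauto. Qed.
Lemma lt_le (a b : G) : ltG a b -> le a b.
Proof. left; auto. Qed.
Lemma lt_le_false (a b : G) : ltG a b -> le b a -> False.
Proof. intros H [H2| ->]. apply (lt_irrefl G a). eapply lt_trans; eauto. apply (lt_irrefl G a); auto. Qed.
Lemma min_ex (a b : G) : exists c, le c a /\ le c b.
Proof. destruct (lt_total G a b) as [H|[H|H]]; [exists a|exists a|exists b]; subst; unfold le; auto. Qed.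
Lemma max_ex (a b : G) : exists c, le a c /\ le b c.
Proof. destruct (lt_total G a b) as [H|[H|H]]; [exists b|exists a|exists a]; subst; unfold le; auto. Qed.
Lemma lt_le_trans' (a b c : G) : ltG a b -> le b c -> ltG a c.
Proof. intros H [H2| ->]; auto. eapply lt_trans; eauto. Qed.
Lemma le_lt_trans' (a b c : G) : le a b -> ltG b c -> ltG a c.
Proof. intros [H2| ->] H; auto. eapply lt_trans; eauto. Qed.

Lemma cell_len n C : is_cell M n C -> forall x, C x -> length x = n.
Proof.
  induction 1; intros z Hz.
  - apply H in Hz; subst; auto.
  - apply H2 in Hz as (x & Hx & ->). rewrite length_app; simpl; rewrite (IHis_cell _ Hx); auto.
  - apply H3 in Hz as (x & t & -> & Hx & _). rewrite length_app; simpl; rewrite (IHis_cell _ Hx); auto.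
Qed.

Lemma band_fib (C : list G -> Prop) (f g : option (list G -> G)) x : C x ->
  (forall x, C x -> match f, g with Some f, Some g => ltG (f x) (g x) | _, _ => True end) ->
  exists t, lower_ok G f x t /\ upper_ok G g x t.
Proof.
  intros Hx H. specialize (H x Hx).
  destruct f as [f|], g as [g|]; simpl in *.
  - destruct (dense M _ _ H) as (t & ?); eauto.
  - destruct (no_max M (f x)) as (t & ?); eauto.
  - destruct (no_min M (g x)) as (t & ?); eauto.
  - exists z0; auto.
Qed.

Lemma cell_ne n C : is_cell M n C -> exists x, C x.
Proof.
  induction 1.
  - exists []. apply H; auto.
  - destruct IHis_cell as (x & Hx). exists (x ++ [f x]). apply H2; eauto.
  - destruct IHis_cell as (x & Hx). destruct (band_fib C f g x Hx H2) as (t & ? & ?).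
    exists (x ++ [t]). apply H3. exists x, t; auto.
Qed.

Lemma proj_ext n C (D : list G -> Prop) k : (forall x, C x -> length x = n) -> k <= n ->
  (forall z, D z -> exists x t, z = x ++ [t] /\ C x) ->
  (forall x, C x -> exists t, D (x ++ [t])) ->
  forall z, proj G k D z <-> proj G k C z.
Proof.
  intros HL Hk H1 H2 z; unfold proj; split.
  - intros (y & Hy & ->). destruct (H1 _ Hy) as (x & t & -> & Hx). exists x; split; auto.
    rewrite firstn_app. specialize (HL _ Hx). replace (k - length x) with 0 by lia. simpl.
    apply app_nil_r.
  - intros (x & Hx & ->). destruct (H2 _ Hx) as (t & Ht). exists (x ++ [t]); split; auto.
    rewrite firstn_app. specialize (HL _ Hx). replace (k - length x) with 0 by lia. simpl.
    symmetry; apply app_nil_r.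
Qed.

Lemma exc_transfer n C D : (forall z, proj G n D z <-> proj G n C z) ->
  (forall k z, k < n -> (proj G (k + 1) D z <-> proj G (k + 1) C z)) ->
  (exceptional M n C -> exceptional M (n + 1) D) /\
  (bad M n C -> ~ exceptional M (n + 1) D -> bad M (n + 1) D).
Proof.
  intros _ H. split.
  - intros (k & A & Hk & HA & HP). exists k, A. split; [lia|]. split; auto.
    intros z. rewrite H by auto. apply HP.
  - intros [_ (k & A & f & Hk & HA & Hf & HP)] Hne. split; auto.
    exists k, A, f. split; [lia|]. split; auto. split; auto.
    destruct HP as [HP|HP]; [left|right]; intros z; rewrite H by auto; apply HP.
Qed.

Lemma cell_def n C : is_cell M n C -> def M n C.
Proof.
  induction 1.
  - eapply def_ext; [exact (def_full M 0)|]. intros x; rewrite H; unfold full.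
    apply length_zero_iff_nil.
  - eapply def_ext; [exact H0|]. intros z; rewrite H2. firstorder.
  - pose proof (cell_len _ _ H) as HL.
    assert (HLo : def M (n + 1) (fun z => exists x t, z = x ++ [t] /\ C x /\ lower_ok G f x t)).
    { destruct f as [f|]; simpl in H0 |- *.
      - destruct H0 as [Hf _].
        exact (def_side G M n C f (lt G) IHis_cell Hf HL
          (fun N i j Hi Hj => def_rel G M N i j (lt G) (def_lt M) Hi Hj)).
      - eapply def_ext; [exact (def_prodr M _ _ IHis_cell)|]. firstorder. }
    assert (HUp : def M (n + 1) (fun z => exists x t, z = x ++ [t] /\ C x /\ upper_ok G g x t)).
    { destruct g as [g|]; simpl in H1 |- *.
      - destruct H1 as [Hg _].
        exact (def_side G M n C g (fun a b => lt G b a) IHis_cell Hg HL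
          (fun N i j Hi Hj => def_rel G M N j i (lt G) (def_lt M) Hj Hi)).
      - eapply def_ext; [exact (def_prodr M _ _ IHis_cell)|]. firstorder. }
    eapply def_ext; [exact (def_inter G M _ _ _ HLo HUp)|]. intros z; rewrite H3. split.
    + intros [(x & t & -> & Hx & Hl) (x' & t' & E & _ & Hu)].
      apply app_inj_tail in E as [<- <-]. exists x, t; auto.
    + intros (x & t & -> & Hx & Hl & Hu). split; eauto.
Qed.
End Cells.

Section Main.
Variable G : OAG.
Variable M : omin_exp G.
Notation ltG := (lt G).

Lemma bounded_ext (S T : list G -> Prop) : (forall z, S z -> T z) -> bounded T -> bounded S.
Proof. intros H (b & b' & Hb). exists b, b'. intros x Hx; apply Hb, H, Hx. Qed.

Lemma graph_bounded n C f : bounded_condition M -> def M n C -> bounded C ->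
  (forall x, C x -> length x = n) -> def_fun M n C f ->
  bounded (fun z => exists x, C x /\ z = x ++ [f x]).
Proof.
  intros HB HC Hb HL Hf.
  apply (HB n (n + 1) C _ HC Hf Hb).
  exists (fun w => exists x, C x /\ w = x ++ x ++ [f x]). split; [|split; [|split]].
  - exact (def_gam G M n C f HC Hf HL).
  - intros z (x & Hx & ->). exists x, (x ++ [f x]). eauto.
  - intros x Hx. exists (x ++ [f x]). split; [eauto|].
    intros y (x' & Hx' & E). apply app_len_inj in E as [<- ->]; auto.
    rewrite (HL _ Hx), (HL _ Hx'); auto.
  - intros y (x & Hx & ->). exists x. split; [eauto|].
    intros x' (x'' & Hx'' & E).
    assert (Hl : length x' = length x'').
    { apply (f_equal (@length G)) in E. rewrite !length_app in E. simpl in E.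
      rewrite (HL _ Hx), (HL _ Hx'') in E. rewrite (HL _ Hx''). lia. }
    apply app_len_inj in E as [-> E]; auto.
    apply app_inj_tail in E as [-> _]. auto.
Qed.

Lemma fst_bound (C : list G -> Prop) f x : bounded (fun z => exists x, C x /\ z = x ++ [f x]) ->
  C x -> exists b b', forall x, C x -> le b (f x) /\ le (f x) b'.
Proof.
  intros (b & b' & Hb) _. exists b, b'. intros y Hy.
  specialize (Hb (y ++ [f y]) ltac:(eauto)). apply Forall_app in Hb as [_ Hb].
  inversion Hb; auto.
Qed.

Lemma good_bounded n C : bounded_condition M -> is_cell M n C ->
  ~ exceptional M n C -> ~ bad M n C -> bounded C.
Proof.
  intros HB. induction 1 as [D HD|n C f D HC IH Hf Hc HD|n C f g D HC IH Hf Hg Hfg HD];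
    intros Hne Hnb.
  - exists (zero G), (zero G). intros x Hx. apply HD in Hx. subst. constructor.
  - pose proof (cell_len G M _ _ HC) as HL.
    assert (HP : forall k z, k <= n -> (proj G k D z <-> proj G k C z)).
    { intros k z Hk. apply (proj_ext G n C D k HL Hk).
      - intros z' Hz'. apply HD in Hz' as (x & Hx & ->). eauto.
      - intros x Hx. exists (f x). apply HD. eauto. }
    destruct (exc_transfer G M n C D (fun z => HP n z (le_n n)) (fun k z Hk => HP (k + 1) z ltac:(lia)))
      as [T1 T2].
    assert (HbC : bounded C) by (apply IH; [intros H; apply Hne, T1, H|intros H; apply Hnb, T2; auto]).
    apply bounded_ext with (T := fun z => exists x, C x /\ z = x ++ [f x]).
    + intros z Hz; apply HD; auto.
    + exact (graph_bounded n C f HB (cell_def G M _ _ HC) HbC HL Hf).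
  - pose proof (cell_len G M _ _ HC) as HL.
    assert (HP : forall k z, k <= n -> (proj G k D z <-> proj G k C z)).
    { intros k z Hk. apply (proj_ext G n C D k HL Hk).
      - intros z' Hz'. apply HD in Hz' as (x & t & -> & Hx & _). eauto.
      - intros x Hx. destruct (band_fib G M C f g x Hx Hfg) as (t & ?). exists t. apply HD. eauto. }
    destruct (exc_transfer G M n C D (fun z => HP n z (le_n n)) (fun k z Hk => HP (k + 1) z ltac:(lia)))
      as [T1 T2].
    assert (HbC : bounded C) by (apply IH; [intros H; apply Hne, T1, H|intros H; apply Hnb, T2; auto]).
    assert (HDp : forall z, proj G (n + 1) D z <-> D z).
    { intros z; split.
      - intros (y & Hy & ->). pose proof (HD y) as [Hy1 _]. destruct (Hy1 Hy) as (x & t & -> & Hx & _).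
        rewrite firstn_all2; auto. rewrite length_app, (HL _ Hx); simpl; lia.
      - intros Hz. exists z; split; auto. pose proof (HD z) as [Hy1 _].
        destruct (Hy1 Hz) as (x & t & -> & Hx & _).
        rewrite firstn_all2; auto. rewrite length_app, (HL _ Hx); simpl; lia. }
    destruct f as [f|], g as [g|]; simpl in Hf, Hg.
    + destruct Hf as [Hf _], Hg as [Hg _].
      pose proof (graph_bounded n C f HB (cell_def G M _ _ HC) HbC HL Hf) as Bf.
      pose proof (graph_bounded n C g HB (cell_def G M _ _ HC) HbC HL Hg) as Bg.
      destruct HbC as (bc & bc' & Hbc).
      destruct (cell_ne G M _ _ HC) as (x0 & Hx0).
      destruct (fst_bound C f x0 Bf Hx0) as (b1 & b1' & Hb1).
      destruct (fst_bound C g x0 Bg Hx0) as (b2 & b2' & Hb2).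
      destruct (min_ex G bc b1) as (lo & Hlo1 & Hlo2).
      destruct (max_ex G bc' b2') as (hi & Hhi1 & Hhi2).
      exists lo, hi. intros z Hz. apply HD in Hz as (x & t & -> & Hx & Hl & Hu). simpl in Hl, Hu.
      apply Forall_app; split.
      * specialize (Hbc _ Hx). eapply Forall_impl; [|exact Hbc]. simpl.
        intros a [H1 H2]; split; [eapply le_trans'; [exact Hlo1|exact H1]|eapply le_trans'; [exact H2|exact Hhi1]].
      * constructor; [|constructor]. destruct (Hb1 _ Hx), (Hb2 _ Hx). split.
        -- apply lt_le. eapply le_lt_trans'; [exact Hlo2|]. eapply le_lt_trans'; eauto.
        -- apply lt_le. eapply lt_le_trans'; [exact Hu|]. eapply le_trans'; eauto.
    + exfalso. apply Hnb. split; auto. exists n, C, f. destruct Hf as [Hf _].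
      split; [lia|]. split; auto. split; auto. right. intros z. rewrite HDp, HD.
      split; intros (x & t & E & Hx & Hl); exists x, t; simpl in *; intuition.
    + exfalso. apply Hnb. split; auto. exists n, C, g. destruct Hg as [Hg _].
      split; [lia|]. split; auto. split; auto. left. intros z. rewrite HDp, HD.
      split; intros (x & t & E & Hx & Hl); exists x, t; simpl in *; intuition.
    + exfalso. apply Hne. exists n, C. split; [lia|]. split; auto.
      intros z. rewrite HDp, HD. split.
      * intros (x & t & E & Hx & _); eauto.
      * intros (x & t & E & Hx); exists x, t; simpl; auto.
Qed.

Lemma bounded_good n C : is_cell M n C -> bounded C -> good M n C.
Proof.
  intros HC (b & b' & Hb).
  assert (Key : forall k z t, proj G (k + 1) C (z ++ [t]) -> le b t /\ le t b').
  { intros k z t (y & Hy & E). specialize (Hb _ Hy). rewrite Forall_forall in Hb. apply Hb.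
    rewrite <- (firstn_skipn (k + 1) y). apply in_or_app. left. rewrite <- E.
    apply in_or_app; right; simpl; auto. }
  assert (NE : ~ exceptional M n C).
  { intros (k & A & Hk & HA & HP). destruct (cell_ne G M _ _ HA) as (a & Ha).
    destruct (no_max M b') as (t & Ht).
    destruct (Key k a t) as [_ H2]. { apply HP. eauto. }
    exact (lt_le_false G _ _ Ht H2). }
  split; auto. intros [_ (k & A & f & Hk & HA & Hf & [HP|HP])].
  - destruct (cell_ne G M _ _ HA) as (a & Ha).
    destruct (min_ex G b (f a)) as (m & Hm1 & Hm2).
    destruct (no_min M m) as (t & Ht).
    destruct (Key k a t) as [H1 _].
    { apply HP. exists a, t. split; auto. split; auto. eapply lt_le_trans'; eauto. }
    exact (lt_le_false G _ _ (lt_le_trans' G _ _ _ Ht Hm1) H1).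
  - destruct (cell_ne G M _ _ HA) as (a & Ha).
    destruct (max_ex G b' (f a)) as (m & Hm1 & Hm2).
    destruct (no_max M m) as (t & Ht).
    destruct (Key k a t) as [_ H2].
    { apply HP. exists a, t. split; auto. split; auto. eapply le_lt_trans'; eauto. }
    exact (lt_le_false G _ _ (le_lt_trans' G _ _ _ Hm1 Ht) H2).
Qed.
End Main.

Theorem lemma4p8 (G : OAG) (M : omin_exp G) :
  bounded_condition M ->
  forall (n : nat) (C : list G -> Prop), is_cell M n C ->
    (good M n C <-> bounded C).
Proof.
  intros HB n C HC. split.
  - intros [H1 H2]. exact (good_bounded G M n C HB HC H1 H2).
  - exact (bounded_good G M n C HC).
Qed.
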